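(* Let $\mathcal{C}$ be an essentially small, concrete, abelian category. For any two constructible persistence modules $F,G\in\mathsf{Pmod}(\mathcal{C})$, $$d_E(F_B,G_B)\le d_I(F,G).$$
   Context: A persistence module is a functor $F:(\mathbb{R},\le)\to\mathcal{C}$. For finite $S=\{s_1<\dots<s_n\}$, $F$ is $S$-constructible if $F(p\le q)$ is the identity on the zero object for $p\le q<s_1$, an isomorphism for $s_i\le p\le q<s_{i+1}$, and an isomorphism for $s_n\le p\le q$; $\mathsf{Pmod}(\mathcal{C})$ consists of modules constructible w.r.t. some finite $S$. Interleaving distance: $\Delta^\varepsilon(F)=F\circ\mathsf{Shift}^\varepsilon$ with $\mathsf{Shift}^\varepsilon(r)=r+\varepsilon$; $\sigma^\varepsilon_F:F\to\Delta^\varepsilon F$ has components $F(r\le r+\varepsilon)$. $F,G$ are $\varepsilon$-interleaved if there exist $\phi:F\to\Delta^\varepsilon G$, $\psi:G\to\Delta^\varepsilon F$ with $\Delta^\varepsilon(\psi)\circ\phi=\sigma^{2\varepsilon}_F$, $\Delta^\varepsilon(\phi)\circ\psi=\sigma^{2\varepsilon}_G$; $d_I(F,G)$ is the minimal such $\varepsilon\ge0$ ($\infty$ if none). $\mathsf{Dgm}$ is the poset of intervals $[q,r)$ ($q<r$) and $[q,\infty)$ under containment. $A(\mathcal{C})$ is the group completion of the monoid of isomorphism classes under $\oplus$; $B(\mathcal{C})$ is $A(\mathcal{C})$ modulo $[b]=[a]+[c]$ for each short exact sequence $0\to a\to b\to c\to0$, with quotient $\pi$; on $B(\mathcal{C})$,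 $x\preceq y$ iff $y-x\in\pi(\{[a]\})$. Type $B$ diagram of $S$-constructible $F$: $dF_B:\mathsf{Dgm}\to B(\mathcal{C})$ is $\pi$ of: $[\operatorname{im}F(p\le s_i-\delta)]$ on $[p,s_i)$ for any $\delta>0$ with $\max(p,s_{i-1})\le s_i-\delta$ ($s_0=-\infty$); $[\operatorname{im}F(p\le s')]$ on $[p,\infty)$ for any $s'>\max(p,s_n)$; $[\operatorname{im}F(p\le q)]$ on all other $[p,q)$. $F_B$ is its Möbius inversion: $F_B([s_i,s_j))=dF_B([s_i,s_j))-dF_B([s_i,s_{j+1}))+dF_B([s_{i-1},s_{j+1}))-dF_B([s_{i-1},s_j))$, $F_B([s_i,\infty))=dF_B([s_i,\infty))-dF_B([s_{i-1},\infty))$ ($s_0$ any value $<s_1$, $s_{n+1}$ any value $>s_n$), zero elsewhere. Persistence diagrams: maps $Y:\mathsf{Dgm}\to B(\mathcal{C})$ nonzero only on intervals with endpoints in some finite set. A morphism $Y_1\to Y_2$ exists iff $\sum_{J\supseteq I}Y_1(J)\preceq\sum_{J\supseteq I}Y_2(J)$ for each $I$ with $Y_1(I)\ne0$. $\nabla^\varepsilon(Y)=Y\circ\mathsf{Grow}^\varepsilon$ where $\mathsf{Grow}^\varepsilon([p,q))=[p-\varepsilon,q+\varepsilon)$, $\mathsf{Grow}^\varepsilon([p,\infty))=[p-\varepsilon,\infty)$. An $\varepsilon$-erosion between $Y_1,Y_2$ is a pair of morphisms $\nabla^\varepsilon(Y_2)\to Y_1$ and $\nabla^\varepsilon(Y_1)\to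 Y_2$; the erosion distance $d_E(Y_1,Y_2)$ is the minimal $\varepsilon\ge0$ admitting an $\varepsilon$-erosion ($\infty$ if none). *)

(* Defs.v *)
From Stdlib Require Import Bool Reals ZArith List ClassicalEpsilon.
From Coquelicot Require Import Coquelicot.
Import ListNotations.
Open Scope bool_scope.
Set Implicit Arguments.
Open Scope R_scope.

Record AbelianCat := {
  Ob : Type;
  Hom : Ob -> Ob -> Type;
  idm : forall a, Hom a a;
  comp : forall a b c, Hom b c -> Hom a b -> Hom a c;
  comp_idl : forall a b (f : Hom a b), comp (idm b) f = f;
  comp_idr : forall a b (f : Hom a b), comp f (idm a) = f;
  comp_assoc : forall a b c d (f : Hom a b) (g : Hom b c) (h : Hom c d),
      comp h (comp g f) = comp (comp h g) f;
  hadd : forall a b, Hom a b -> Hom a b -> Hom a b;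
  hzero : forall a b, Hom a b;
  hneg : forall a b, Hom a b -> Hom a b;
  hadd_assoc : forall a b (f g h : Hom a b), hadd f (hadd g h) = hadd (hadd f g) h;
  hadd_comm : forall a b (f g : Hom a b), hadd f g = hadd g f;
  hadd_0 : forall a b (f : Hom a b), hadd (hzero a b) f = f;
  hadd_neg : forall a b (f : Hom a b), hadd (hneg f) f = hzero a b;
  comp_addl : forall a b c (f : Hom a b) (g h : Hom b c),
      comp (hadd g h) f = hadd (comp g f) (comp h f);
  comp_addr : forall a b c (f g : Hom a b) (h : Hom b c),
      comp h (hadd f g) = hadd (comp h f) (comp h g);
  zero_ex : exists z : Ob,
      forall a, (exists f : Hom z a, forall g, g = f) /\ (exists f : Hom a z, forall g, g = f);
  biprod_ex : forall a b, exists (ab : Ob) (i1 : Hom a ab) (i2 : Hom b ab)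
      (p1 : Hom ab a) (p2 : Hom ab b),
      comp p1 i1 = idm a /\ comp p2 i2 = idm b /\
      comp p1 i2 = hzero b a /\ comp p2 i1 = hzero a b /\
      hadd (comp i1 p1) (comp i2 p2) = idm ab;
  kernel_ex : forall a b (f : Hom a b), exists (K : Ob) (k : Hom K a),
      comp f k = hzero K b /\
      forall X (h : Hom X a), comp f h = hzero X b -> exists! u : Hom X K, comp k u = h;
  cokernel_ex : forall a b (f : Hom a b), exists (Q : Ob) (c : Hom b Q),
      comp c f = hzero a Q /\
      forall X (h : Hom b X), comp h f = hzero a X -> exists! u : Hom Q X, comp u c = h;
  (* every mono is a kernel of its cokernel / every epi a cokernel of its kernel:
     stated below through the predicates, see [abelian_normal] *)
}.

Arguments idm {C} a : rename.
Arguments comp {C a b c} _ _ : rename.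
Arguments hzero {C} a b : rename.

Section CatDefs.
Variable C : AbelianCat.

Definition mono a b (m : Hom C a b) : Prop :=
  forall X (g h : Hom C X a), comp m g = comp m h -> g = h.
Definition epi a b (e : Hom C a b) : Prop :=
  forall X (g h : Hom C b X), comp g e = comp h e -> g = h.
Definition is_iso a b (f : Hom C a b) : Prop :=
  exists g : Hom C b a, comp g f = idm a /\ comp f g = idm b.
Definition is_zero (z : Ob C) : Prop :=
  forall a, (exists f : Hom C z a, forall g, g = f) /\ (exists f : Hom C a z, forall g, g = f).
Definition is_kernel a b (f : Hom C a b) K (k : Hom C K a) : Prop :=
  comp f k = hzero K b /\
  forall X (h : Hom C X a), comp f h = hzero X b -> exists! u : Hom C X K, comp k u = h.
Definition is_cokernel a b (f : Hom C a b) Q (c : Hom C b Q) : Prop :=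
  comp c f = hzero a Q /\
  forall X (h : Hom C b X), comp h f = hzero a X -> exists! u : Hom C Q X, comp u c = h.
End CatDefs.
Arguments mono {C a b} m.
Arguments epi {C a b} e.
Arguments is_iso {C a b} f.
Arguments is_zero {C} z.
Arguments is_kernel {C a b} f {K} k.
Arguments is_cokernel {C a b} f {Q} c.

Definition abelian_normal (C : AbelianCat) : Prop :=
  (forall a b (m : Hom C a b), mono m ->
     exists Q (c : Hom C b Q), is_cokernel m c /\ is_kernel c m) /\
  (forall a b (e : Hom C a b), epi e ->
     exists K (k : Hom C K a), is_kernel e k /\ is_cokernel k e).

Definition concrete (C : AbelianCat) : Prop :=
  exists (U : Ob C -> Type) (Um : forall a b, Hom C a b -> U a -> U b),
    (forall a x, Um a a (idm a) x = x) /\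
    (forall a b c (f : Hom C a b) (g : Hom C b c) x, Um a c (comp g f) x = Um b c g (Um a b f x)) /\
    (forall a b (f g : Hom C a b), Um a b f = Um a b g -> f = g).

Definition is_image {C : AbelianCat} {a b} (f : Hom C a b) (I : Ob C) : Prop :=
  exists (e : Hom C a I) (m : Hom C I b), epi e /\ mono m /\ comp m e = f.

(* a chosen image object of f (images exist in an abelian category) *)
Definition im_obj {C : AbelianCat} {a b} (f : Hom C a b) : Ob C :=
  epsilon (inhabits a) (is_image f).

Definition SES {C : AbelianCat} (a b c : Ob C) : Prop :=
  exists (f : Hom C a b) (g : Hom C b c), mono f /\ epi g /\ is_kernel g f.

(* Elements of the free abelian group on objects: formal Z-combinations. *)
Definition Belt (C : AbelianCat) := list (Z * Ob C).

Definition cls {C : AbelianCat} (a : Ob C) : Belt C := [(1%Z, a)].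
Definition Bneg {C : AbelianCat} (x : Belt C) : Belt C :=
  map (fun t => (Z.opp (fst t), snd t)) x.

Definition coeff {C : AbelianCat} (x : Belt C) (o : Ob C) : Z :=
  fold_right (fun t acc =>
      ((if excluded_middle_informative (snd t = o) then fst t else 0%Z) + acc)%Z) 0%Z x.

(* x lies in the subgroup generated by [b]-[a]-[c] for short exact sequences
   (this subgroup contains the isomorphism and direct sum relations, so the
   quotient is B(C) = A(C) / SES-relations) *)
Definition Bnull {C : AbelianCat} (x : Belt C) : Prop :=
  exists gens : list (Z * (Ob C * Ob C * Ob C)),
    List.Forall (fun g => let '(_, (a, b, c)) := g in SES a b c) gens /\
    forall o, coeff x o =
      fold_right (fun g acc => let '(n, (a, b, c)) := g in
         (n * (coeff (cls b) o - coeff (cls a) o - coeff (cls c) o) + acc)%Z) 0%Z gens.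

Definition Beq {C : AbelianCat} (x y : Belt C) : Prop := Bnull (x ++ Bneg y).
Definition Ble {C : AbelianCat} (x y : Belt C) : Prop :=
  exists a : Ob C, Bnull (y ++ Bneg x ++ Bneg (cls a)).

Record PMod (C : AbelianCat) := {
  Fob : R -> Ob C;
  Fmap : forall p q, p <= q -> Hom C (Fob p) (Fob q);
  Fmap_id : forall p (h : p <= p), Fmap h = idm (Fob p);
  Fmap_comp : forall p q r (h1 : p <= q) (h2 : q <= r) (h3 : p <= r),
      Fmap h3 = comp (Fmap h2) (Fmap h1)
}.
Arguments Fob {C} F r : rename.
Arguments Fmap {C} F {p q} h : rename.

Definition constructible {C : AbelianCat} (F : PMod C) (n : nat) (s : nat -> R) : Prop :=
  (1 <= n)%nat /\
  (forall i, (1 <= i)%nat -> (i < n)%nat -> s i < s (S i)) /\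
  (forall p, p < s 1%nat -> is_zero (Fob F p)) /\
  (forall i, (1 <= i)%nat -> (i < n)%nat ->
     forall p q (h : p <= q), s i <= p -> q < s (S i) -> is_iso (Fmap F h)) /\
  (forall p q (h : p <= q), s n <= p -> is_iso (Fmap F h)).

Definition interleaved {C : AbelianCat} (F G : PMod C) (eps : R) : Prop :=
  exists (phi : forall r, Hom C (Fob F r) (Fob G (r + eps)))
         (psi : forall r, Hom C (Fob G r) (Fob F (r + eps))),
    (forall r s (h : r <= s) (h' : r + eps <= s + eps),
        comp (Fmap G h') (phi r) = comp (phi s) (Fmap F h)) /\
    (forall r s (h : r <= s) (h' : r + eps <= s + eps),
        comp (Fmap F h') (psi r) = comp (psi s) (Fmap G h)) /\
    (forall r (h : r <= r + eps + eps), comp (psi (r + eps)) (phi r) = Fmap F h) /\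
    (forall r (h : r <= r + eps + eps), comp (phi (r + eps)) (psi r) = Fmap G h).

(* minimal eps >= 0 (infimum in the extended reals; +oo if none) *)
Definition d_I {C : AbelianCat} (F G : PMod C) : Rbar :=
  Glb_Rbar (fun eps => 0 <= eps /\ interleaved F G eps).

(* Fin p q = [p, q),  Inf p = [p, oo) *)
Inductive interval := Fin (p q : R) | Inf (p : R).

Definition valid (I : interval) : Prop :=
  match I with Fin p q => p < q | Inf _ => True end.

Definition leb (x y : R) : bool := if Rle_dec x y then true else false.
Definition ltb (x y : R) : bool := if Rlt_dec x y then true else false.
Definition eqb (x y : R) : bool := if Req_EM_T x y then true else false.

Definition validb (I : interval) : bool :=
  match I with Fin p q => ltb p q | Inf _ => true end.

(* containsb J I = (J contains I) *)
Definition containsb (J I : interval) : bool :=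
  match J, I with
  | Fin a b, Fin c d => leb a c && leb d b
  | Fin _ _, Inf _ => false
  | Inf a, Fin c _ => leb a c
  | Inf a, Inf c => leb a c
  end.

Definition diagram (C : AbelianCat) := interval -> Belt C.

Definition fin_supp {C : AbelianCat} (Y : diagram C) (L : list interval) : Prop :=
  NoDup L /\ forall J, valid J -> ~ In J L -> Bnull (Y J).

Definition upsum {C : AbelianCat} (Y : diagram C) (L : list interval) (I : interval) : Belt C :=
  flat_map (fun J => if validb J && containsb J I then Y J else []) L.

(* a morphism Y1 -> Y2 exists *)
Definition diag_mor {C : AbelianCat} (Y1 Y2 : diagram C) : Prop :=
  exists L1 L2, fin_supp Y1 L1 /\ fin_supp Y2 L2 /\
    forall I, valid I -> ~ Bnull (Y1 I) -> Ble (upsum Y1 L1 I) (upsum Y2 L2 I).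

Definition Grow (eps : R) (I : interval) : interval :=
  match I with Fin p q => Fin (p - eps) (q + eps) | Inf p => Inf (p - eps) end.

Definition nabla {C : AbelianCat} (eps : R) (Y : diagram C) : diagram C :=
  fun I => Y (Grow eps I).

Definition eroded {C : AbelianCat} (Y1 Y2 : diagram C) (eps : R) : Prop :=
  diag_mor (nabla eps Y2) Y1 /\ diag_mor (nabla eps Y1) Y2.

Definition d_E {C : AbelianCat} (Y1 Y2 : diagram C) : Rbar :=
  Glb_Rbar (fun eps => 0 <= eps /\ eroded Y1 Y2 eps).

(* [im F(p <= q)] (empty combination if p > q: never used on valid intervals) *)
Definition imc {C : AbelianCat} (F : PMod C) (p q : R) : Belt C :=
  match Rle_dec p q with
  | left h => cls (im_obj (Fmap F h))
  | right _ => []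
  end.

Fixpoint find_idx (s : nat -> R) (q : R) (k : nat) : option nat :=
  match k with
  | O => None
  | S k' => if Req_EM_T q (s k) then Some k else find_idx s q k'
  end.

(* max(p, s_{i-1}) with s_0 = -oo *)
Definition prev_bound (s : nat -> R) (i : nat) (p : R) : R :=
  if Nat.eqb i 1 then p else Rmax p (s (pred i)).

(* dF_B; for [p, s_i) we take delta = (s_i - max(p,s_{i-1}))/2, and for
   [p, oo) we take s' = max(p, s_n) + 1 *)
Definition dFB {C : AbelianCat} (F : PMod C) (n : nat) (s : nat -> R) (I : interval) : Belt C :=
  match I with
  | Fin p q =>
      match find_idx s q n with
      | Some i => imc F p ((prev_bound s i p + s i) / 2)
      | None => imc F p q
      end
  | Inf p => imc F p (Rmax p (s n) + 1)
  end.

Definition sx (n : nat) (s : nat -> R) (i : nat) : R :=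
  if Nat.eqb i 0 then s 1%nat - 1
  else if Nat.eqb i (S n) then s n + 1 else s i.

(* F_B: Möbius inversion of dF_B *)
Definition FB {C : AbelianCat} (F : PMod C) (n : nat) (s : nat -> R) : diagram C :=
  fun I =>
  match I with
  | Fin p q =>
      flat_map (fun i =>
        flat_map (fun j =>
          if eqb p (s i) && eqb q (s j) then
            dFB F n s (Fin (sx n s i) (sx n s j))
            ++ Bneg (dFB F n s (Fin (sx n s i) (sx n s (S j))))
            ++ dFB F n s (Fin (sx n s (pred i)) (sx n s (S j)))
            ++ Bneg (dFB F n s (Fin (sx n s (pred i)) (sx n s j)))
          else []) (seq (S i) (n - i)))
        (seq 1 n)
  | Inf p =>
      flat_map (fun i =>
        if eqb p (s i) then
          dFB F n s (Inf (s i)) ++ Bneg (dFB F n s (Inf (sx n s (pred i))))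
        else []) (seq 1 n)
  end.

(* Main.v *)
Require Import Defs.
From Stdlib Require Import Reals.
From Coquelicot Require Import Coquelicot.
From Stdlib Require Import Bool List Lia Lra ZArith ClassicalEpsilon.
Import Defs.
Import ListNotations.


Notation hp f g := (hadd _ _ _ f g).
Notation hn f := (hneg _ _ _ f).

Lemma hadd_0r {C : AbelianCat} {a b} (f : Hom C a b) : hp f (hzero a b) = f.
Proof. rewrite hadd_comm. apply hadd_0. Qed.

Lemma hadd_cancel {C : AbelianCat} {a b} (f g h : Hom C a b) : hp f g = hp f h -> g = h.
Proof.
  intro E. assert (E2 : hp (hn f) (hp f g) = hp (hn f) (hp f h)) by (rewrite E; reflexivity).
  rewrite !hadd_assoc, hadd_neg, !hadd_0 in E2. exact E2.
Qed.

Lemma comp_0r {C : AbelianCat} a b c (f : Hom C b c) : comp f (hzero a b) = hzero a c.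
Proof.
  assert (E : hp (comp f (hzero a b)) (comp f (hzero a b)) = hp (comp f (hzero a b)) (hzero a c)).
  { rewrite <- comp_addr, hadd_0, hadd_0r. reflexivity. }
  apply hadd_cancel in E. exact E.
Qed.

Lemma comp_0l {C : AbelianCat} a b c (f : Hom C a b) : comp (hzero b c) f = hzero a c.
Proof.
  assert (E : hp (comp (hzero b c) f) (comp (hzero b c) f) = hp (comp (hzero b c) f) (hzero a c)).
  { rewrite <- comp_addl, hadd_0, hadd_0r. reflexivity. }
  apply hadd_cancel in E. exact E.
Qed.

Lemma comp_negr {C : AbelianCat} a b c (f : Hom C a b) (m : Hom C b c) :
  comp m (hn f) = hn (comp m f).
Proof.
  apply (hadd_cancel (comp m f)).
  rewrite (hadd_comm _ _ _ (comp m f) (hn (comp m f))), hadd_neg.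
  rewrite <- comp_addr, hadd_comm, hadd_neg. apply comp_0r.
Qed.

Lemma mono_of_zero {C : AbelianCat} a b (m : Hom C a b) :
  (forall X (g : Hom C X a), comp m g = hzero X b -> g = hzero X a) -> mono m.
Proof.
  intros H X g h E.
  assert (E2 : comp m (hp g (hn h)) = hzero X b).
  { rewrite comp_addr, comp_negr, E, hadd_comm. apply hadd_neg. }
  apply H in E2.
  assert (E3 : hp (hp g (hn h)) h = hp (hzero X a) h) by (rewrite E2; reflexivity).
  rewrite <- hadd_assoc, hadd_neg, hadd_0r, hadd_0 in E3.
  exact E3.
Qed.

Lemma kernel_mono {C : AbelianCat} a b (f : Hom C a b) K (k : Hom C K a) :
  is_kernel f k -> mono k.
Proof.
  intros [Hk Hu] X g h E.
  assert (Z : comp f (comp k g) = hzero X b) by (rewrite comp_assoc, Hk; apply comp_0l).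
  destruct (Hu X (comp k g) Z) as [u [_ Uu]].
  transitivity u; [symmetry|]; apply Uu; auto.
Qed.

Lemma coker_epi {C : AbelianCat} a b (f : Hom C a b) Q (c : Hom C b Q) :
  is_cokernel f c -> epi c.
Proof.
  intros [Hc Hu] X g h E.
  assert (Z : comp (comp g c) f = hzero a X) by (rewrite <- comp_assoc, Hc; apply comp_0r).
  destruct (Hu X (comp g c) Z) as [u [_ Uu]].
  transitivity u; [symmetry|]; apply Uu; auto.
Qed.

Lemma epi_comp {C : AbelianCat} a b c (e1 : Hom C a b) (e2 : Hom C b c) :
  epi e1 -> epi e2 -> epi (comp e2 e1).
Proof.
  intros H1 H2 X g h E. rewrite !comp_assoc in E. apply H2, H1, E.
Qed.

Lemma mono_comp {C : AbelianCat} a b c (e1 : Hom C a b) (e2 : Hom C b c) :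
  mono e1 -> mono e2 -> mono (comp e2 e1).
Proof.
  intros H1 H2 X g h E. rewrite <- !comp_assoc in E. apply H1, H2, E.
Qed.

Lemma image_exists {C : AbelianCat} (hab : abelian_normal C) a b (f : Hom C a b) :
  exists I, is_image f I.
Proof.
  destruct hab as [Hm He].
  destruct (kernel_ex C a b f) as [K [k [Hk Hku]]].
  destruct (cokernel_ex C K a k) as [Q [c [Hc Hcu]]].
  assert (Hcc : is_cokernel k c) by (split; auto).
  destruct (Hcu b f Hk) as [f' [Ef' _]].
  exists Q, c, f'. split; [eapply coker_epi; eauto|]. split; [|exact Ef'].
  apply mono_of_zero. intros X g Eg.
  destruct (kernel_ex C Q b f') as [L [j [Hj Hju]]].
  assert (Hjk : is_kernel f' j) by (split; auto).
  destruct (Hju X g Eg) as [u [Eu _]].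
  assert (jm : mono j) by (eapply kernel_mono; eauto).
  destruct (Hm _ _ j jm) as [P [pi [Hpi Hpik]]].
  destruct Hpi as [Hpi0 Hpiu].
  destruct (Hpiu b f' Hj) as [f'' [Ef'' _]].
  assert (epc : epi (comp pi c)).
  { apply epi_comp; [eapply coker_epi; eauto | eapply coker_epi; split; eauto]. }
  destruct (He _ _ _ epc) as [M [l [Hl Hlc]]].
  destruct Hl as [Hl0 _].
  assert (fl : comp f l = hzero M b).
  { rewrite <- Ef', <- Ef''. rewrite <- (comp_assoc _ _ _ _ _ c pi f'').
    rewrite <- comp_assoc, Hl0. apply comp_0r. }
  destruct (Hku M l fl) as [l' [El' _]].
  assert (cl : comp c l = hzero M Q).
  { rewrite <- El', comp_assoc, Hc. apply comp_0l. }
  destruct Hlc as [_ Hlcu].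
  destruct (Hlcu Q c cl) as [r [Er _]].
  assert (rpi : comp r pi = idm Q).
  { apply (coker_epi _ _ _ _ _ Hcc). rewrite <- comp_assoc, Er, comp_idl. reflexivity. }
  assert (j0 : j = hzero L Q).
  { rewrite <- (comp_idl C _ _ j), <- rpi, <- comp_assoc, Hpi0. apply comp_0r. }
  rewrite <- Eu, j0. apply comp_0l.
Qed.

Lemma im_spec {C : AbelianCat} (hab : abelian_normal C) a b (f : Hom C a b) :
  is_image f (im_obj f).
Proof.
  unfold im_obj. apply epsilon_spec. apply image_exists; auto.
Qed.

Lemma fill_in {C : AbelianCat} (hab : abelian_normal C) X Y Z W
  (e : Hom C X Y) (m : Hom C Z W) (a : Hom C X Z) (b : Hom C Y W) :
  epi e -> mono m -> comp m a = comp b e -> exists d, comp d e = a /\ comp m d = b.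
Proof.
  intros He Hm E. destruct hab as [_ Hn].
  destruct (Hn _ _ e He) as [K [k [[Hk _] [_ Hcu]]]].
  assert (ak : comp a k = hzero K Z).
  { apply Hm. rewrite comp_0r, comp_assoc, E, <- comp_assoc, Hk. apply comp_0r. }
  destruct (Hcu Z a ak) as [d [Ed _]].
  exists d. split; auto. apply He. rewrite <- comp_assoc, Ed. auto.
Qed.
Definition gsum {C : AbelianCat} (gens : list (Z * (Ob C * Ob C * Ob C))) o : Z :=
  fold_right (fun g acc => let '(n, (a, b, c)) := g in
         (n * (coeff (cls b) o - coeff (cls a) o - coeff (cls c) o) + acc)%Z) 0%Z gens.

Lemma gsum_app {C : AbelianCat} (g1 g2 : list (Z * (Ob C * Ob C * Ob C))) o :
  gsum (g1 ++ g2) o = (gsum g1 o + gsum g2 o)%Z.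
Proof.
  unfold gsum. induction g1 as [|[n [[a b] c]] g1 IH]; [reflexivity|].
  change (((n * (coeff (cls b) o - coeff (cls a) o - coeff (cls c) o)) + gsum (g1 ++ g2) o)
     = ((n * (coeff (cls b) o - coeff (cls a) o - coeff (cls c) o)) + gsum g1 o) + gsum g2 o)%Z.
  unfold gsum. rewrite IH. ring.
Qed.

Definition gneg {C : AbelianCat} (g : list (Z * (Ob C * Ob C * Ob C))) :=
  map (fun t => (Z.opp (fst t), snd t)) g.

Lemma gsum_neg {C : AbelianCat} (g : list (Z * (Ob C * Ob C * Ob C))) o :
  gsum (gneg g) o = (- gsum g o)%Z.
Proof.
  induction g as [|[n [[a b] c]] g1 IH]; [reflexivity|].
  change (((-n) * (coeff (cls b) o - coeff (cls a) o - coeff (cls c) o)) + gsum (gneg g1) o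
     = - ((n * (coeff (cls b) o - coeff (cls a) o - coeff (cls c) o)) + gsum g1 o))%Z.
  rewrite IH. ring.
Qed.

Lemma coeff_app {C : AbelianCat} (x y : Belt C) o : coeff (x ++ y) o = (coeff x o + coeff y o)%Z.
Proof. induction x as [|t x IH]; simpl; [reflexivity|]. unfold coeff in *. simpl. rewrite IH. ring. Qed.

Lemma coeff_neg {C : AbelianCat} (x : Belt C) o : coeff (Bneg x) o = (- coeff x o)%Z.
Proof.
  induction x as [|t x IH]; simpl; [reflexivity|]. unfold coeff in *. simpl. rewrite IH.
  destruct (excluded_middle_informative (snd t = o)); ring.
Qed.

Lemma coeff_nil {C : AbelianCat} o : coeff (@nil (Z * Ob C)) o = 0%Z.
Proof. reflexivity. Qed.



Lemma Bnull_ext {C : AbelianCat} (x y : Belt C) :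
  (forall o, coeff x o = coeff y o) -> Bnull y -> Bnull x.
Proof.
  intros E [g [Hg Hs]]. exists g. split; auto. intro o. rewrite E. apply Hs.
Qed.

Lemma Bnull_nil {C : AbelianCat} : Bnull (@nil (Z * Ob C)).
Proof. exists nil. split; auto. Qed.

Lemma Bnull_app {C : AbelianCat} (x y : Belt C) : Bnull x -> Bnull y -> Bnull (x ++ y).
Proof.
  intros [g1 [H1 S1]] [g2 [H2 S2]]. exists (g1 ++ g2). split.
  - apply List.Forall_app; auto.
  - intro o. change (coeff (x ++ y) o = gsum (g1 ++ g2) o). rewrite gsum_app, coeff_app. rewrite (S1 o), (S2 o). reflexivity.
Qed.

Lemma Bnull_neg {C : AbelianCat} (x : Belt C) : Bnull x -> Bnull (Bneg x).
Proof.
  intros [g [H S]]. exists (gneg g). split.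
  - unfold gneg. rewrite List.Forall_map. eapply List.Forall_impl; [|exact H].
    intros [n [[a b] c]]; simpl; auto.
  - intro o. change (coeff (Bneg x) o = gsum (gneg g) o). rewrite gsum_neg, coeff_neg, (S o). reflexivity.
Qed.

Lemma Bnull_SES {C : AbelianCat} (a b c : Ob C) : SES a b c ->
  Bnull (cls b ++ Bneg (cls a) ++ Bneg (cls c)).
Proof.
  intro H. exists [(1%Z, (a, b, c))]. split; [constructor; auto|].
  intro o. rewrite !coeff_app, !coeff_neg. cbn [fold_right]. ring.
Qed.

Lemma zero_ses {C : AbelianCat} (z : Ob C) : is_zero z -> SES z z z.
Proof.
  intro Hz. exists (idm z), (idm z).
  assert (u : forall X (g h : Hom C z X), g = h).
  { intros X g h. destruct (proj1 (Hz X)) as [f Hf]. rewrite (Hf g), (Hf h). auto. }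
  assert (u' : forall X (g h : Hom C X z), g = h).
  { intros X g h. destruct (proj2 (Hz X)) as [f Hf]. rewrite (Hf g), (Hf h). auto. }
  split; [intros X g h _; apply u'|]. split; [intros X g h _; apply u|].
  split; [apply u|]. intros X h _. exists h. split; [apply u'|]. intros; apply u'.
Qed.

Lemma Bnull_zero {C : AbelianCat} (z : Ob C) : is_zero z -> Bnull (cls z).
Proof.
  intro Hz. apply Bnull_ext with (y := Bneg (cls z ++ Bneg (cls z) ++ Bneg (cls z))).
  - intro o. rewrite !coeff_neg, !coeff_app, !coeff_neg. ring.
  - apply Bnull_neg, Bnull_SES, zero_ses, Hz.
Qed.

Lemma mono_ses {C : AbelianCat} (hab : abelian_normal C) a b (m : Hom C a b) :
  mono m -> exists Q, SES a b Q.
Proof.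
  intro Hm. destruct (proj1 hab _ _ m Hm) as [Q [c [Hc Hk]]].
  exists Q, m, c. split; auto. split; auto. eapply coker_epi; eauto.
Qed.

Lemma epi_ses {C : AbelianCat} a b (e : Hom C a b) :
  epi e -> exists K, SES K a b.
Proof.
  intro He. destruct (kernel_ex C a b e) as [K [k [Hk Hu]]].
  exists K, k, e. assert (is_kernel e k) by (split; auto).
  split; [eapply kernel_mono; eauto|]. split; auto.
Qed.

Lemma epi_of_rinv {C : AbelianCat} a b (e : Hom C a b) (s : Hom C b a) :
  comp e s = idm b -> epi e.
Proof.
  intros E X g h Eg. rewrite <- (comp_idr C _ _ g), <- (comp_idr C _ _ h), <- E, !comp_assoc, Eg. auto.
Qed.

Lemma mono_of_linv {C : AbelianCat} a b (m : Hom C a b) (r : Hom C b a) :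
  comp r m = idm a -> mono m.
Proof.
  intros E X g h Eg. rewrite <- (comp_idl C _ _ g), <- (comp_idl C _ _ h), <- E, <- !comp_assoc, Eg. auto.
Qed.

Lemma biprod_ses {C : AbelianCat} (a b : Ob C) : exists S, SES a S b.
Proof.
  destruct (biprod_ex C a b) as [S [i1 [i2 [p1 [p2 [E1 [E2 [E3 [E4 E5]]]]]]]]].
  exists S, i1, p2. split; [eapply mono_of_linv; eauto|]. split; [eapply epi_of_rinv; eauto|].
  split; auto. intros X h Hh. exists (comp p1 h). split.
  - rewrite <- (comp_idl C _ _ h) at 2. rewrite <- E5, comp_addl, <- !comp_assoc, Hh, comp_0r, hadd_0r.
    reflexivity.
  - intros u Hu. apply (mono_of_linv _ _ _ _ E1). rewrite <- Hu, (comp_assoc _ _ _ _ _ u i1 p1), E1, comp_idl. auto.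
Qed.

Lemma monoepi_ses {C : AbelianCat} (hab : abelian_normal C) a b (d : Hom C a b) :
  mono d -> epi d -> exists Q, SES a b Q /\ is_zero Q.
Proof.
  intros Hm He. destruct (proj1 hab _ _ d Hm) as [Q [c [Hc Hk]]].
  assert (ce : epi c) by (eapply coker_epi; eauto).
  assert (c0 : c = hzero b Q).
  { apply He. rewrite (proj1 Hc), comp_0l. auto. }
  assert (id0 : idm Q = hzero Q Q).
  { apply ce. rewrite comp_idl, c0, comp_0l. auto. }
  exists Q. split; [exists d, c; auto|].
  intro X. split.
  - exists (hzero Q X). intro g. apply ce. rewrite c0, !comp_0r. auto.
  - exists (hzero X Q). intro g. rewrite <- (comp_idl C _ _ g), id0, comp_0l. auto.
Qed.

Lemma zero_of_epi_from_zero {C : AbelianCat} z I (e : Hom C z I) :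
  is_zero z -> epi e -> is_zero I.
Proof.
  intros Hz He. 
  assert (u : forall X (g h : Hom C z X), g = h).
  { intros X g h. destruct (proj1 (Hz X)) as [f Hf]. rewrite (Hf g), (Hf h). auto. }
  assert (id0 : idm I = hzero I I) by (apply He; apply u).
  intro X. split.
  - exists (hzero I X). intro g. apply He. apply u.
  - exists (hzero X I). intro g. rewrite <- (comp_idl C _ _ g), id0, comp_0l. auto.
Qed.

Lemma Bnull_im_zero {C : AbelianCat} (hab : abelian_normal C) z b (f : Hom C z b) :
  is_zero z -> Bnull (cls (im_obj f)).
Proof.
  intro Hz. destruct (im_spec hab _ _ f) as [e [m [He [Hm E]]]].
  apply Bnull_zero. eapply zero_of_epi_from_zero; eauto.
Qed.

Lemma dom_im {C : AbelianCat} (hab : abelian_normal C) A B A' B'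
  (u : Hom C A B) (v : Hom C A' B') (t : Hom C A' A) (w : Hom C B B') :
  v = comp w (comp u t) ->
  exists S, Bnull (cls (im_obj u) ++ Bneg (cls (im_obj v)) ++ Bneg (cls S)).
Proof.
  intro Ev.
  destruct (im_spec hab _ _ u) as [e [m [He [Hm Eu]]]].
  destruct (im_spec hab _ _ v) as [e' [m' [He' [Hm' Ev']]]].
  destruct (image_exists hab _ _ (comp e t)) as [I2 [e2 [m2 [He2 [Hm2 E2]]]]].
  destruct (image_exists hab _ _ (comp w (comp m m2))) as [I3 [e3 [m3 [He3 [Hm3 E3]]]]].
  assert (Ev2 : comp m3 (comp e3 e2) = comp m' e').
  { rewrite Ev', Ev, comp_assoc, E3.
    rewrite <- !comp_assoc, E2, (comp_assoc _ _ _ _ _ t e m), Eu. reflexivity. }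
  destruct (fill_in hab _ _ _ _ e' m3 (comp e3 e2) m' He' Hm3 Ev2) as [d [Ed1 Ed2]].
  assert (dm : mono d).
  { intros X g h Eg. apply Hm'. rewrite <- Ed2, <- !comp_assoc, Eg. auto. }
  assert (de : epi d).
  { intros X g h Eg. apply (epi_comp _ _ _ _ _ He2 He3). rewrite <- Ed1, !comp_assoc, Eg. auto. }
  destruct (monoepi_ses hab _ _ d dm de) as [Q [SQ ZQ]].
  destruct (mono_ses hab _ _ m2 Hm2) as [Q2 S2].
  destruct (epi_ses _ _ e3 He3) as [K3 S3].
  destruct (biprod_ses Q2 K3) as [S SS].
  exists S.
  pose proof (Bnull_SES _ _ _ S2) as N1.
  pose proof (Bnull_SES _ _ _ S3) as N2.
  pose proof (Bnull_SES _ _ _ SQ) as N3.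
  pose proof (Bnull_zero _ ZQ) as N4.
  pose proof (Bnull_SES _ _ _ SS) as N5.
  apply Bnull_ext with (y := (cls (im_obj u) ++ Bneg (cls I2) ++ Bneg (cls Q2)) ++
     (cls I2 ++ Bneg (cls K3) ++ Bneg (cls I3)) ++ (cls I3 ++ Bneg (cls (im_obj v)) ++ Bneg (cls Q))
     ++ cls Q ++ Bneg (cls S ++ Bneg (cls Q2) ++ Bneg (cls K3))).
  - intro o. rewrite !coeff_app, !coeff_neg, !coeff_app, !coeff_neg. ring.
  - apply Bnull_app; [exact N1|]. apply Bnull_app; [exact N2|]. apply Bnull_app; [exact N3|].
    apply Bnull_app; [exact N4|]. apply Bnull_neg; exact N5.
Qed.

Definition zsum {A} (l : list A) (f : A -> Z) : Z := fold_right (fun x acc => (f x + acc)%Z) 0%Z l.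

Lemma zsum_app {A} (l1 l2 : list A) f : zsum (l1 ++ l2) f = (zsum l1 f + zsum l2 f)%Z.
Proof. induction l1; simpl; [reflexivity|]. unfold zsum in *; simpl. rewrite IHl1. ring. Qed.

Lemma zsum_map {A B} (g : A -> B) l f : zsum (map g l) f = zsum l (fun x => f (g x)).
Proof. induction l; simpl; [reflexivity|]. unfold zsum in *; simpl. rewrite IHl. ring. Qed.

Lemma zsum_flat_map {A B} (g : A -> list B) l f :
  zsum (flat_map g l) f = zsum l (fun x => zsum (g x) f).
Proof. induction l; simpl; [reflexivity|]. rewrite zsum_app. unfold zsum in *; simpl. rewrite IHl. ring. Qed.

Lemma zsum_ext {A} (l : list A) f g : (forall x, In x l -> f x = g x) -> zsum l f = zsum l g.
Proof.
  induction l; intros H; simpl; [reflexivity|]. unfold zsum in *; simpl.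
  rewrite H by (left; auto). rewrite IHl; auto. intros; apply H; right; auto.
Qed.

Lemma zsum_zero {A} (l : list A) f : (forall x, In x l -> f x = 0%Z) -> zsum l f = 0%Z.
Proof.
  induction l as [|x l IH]; intro H; [reflexivity|].
  unfold zsum; simpl. fold (zsum l f). rewrite IH, H; [ring|left; auto|]. intros; apply H; right; auto.
Qed.

Lemma zsum_single {A} (l : list A) f k0 :
  NoDup l -> In k0 l -> (forall k, In k l -> k <> k0 -> f k = 0%Z) -> zsum l f = f k0.
Proof.
  induction l as [|x l IH]; intros ND Hin H; [destruct Hin|].
  inversion ND; subst. unfold zsum; simpl. fold (zsum l f).
  destruct Hin as [<-|Hin].
  - rewrite zsum_zero; [ring|]. intros k Hk. apply H; [right; auto|]. intro; subst; contradiction.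
  - rewrite IH; auto. rewrite H; [ring|left; auto|]. intro; subst; contradiction.
    intros; apply H; auto; right; auto.
Qed.

Lemma zsum_if {A} (l : list A) (c : bool) f :
  zsum l (fun x => if c then f x else 0%Z) = if c then zsum l f else 0%Z.
Proof. destruct c; auto. apply zsum_zero; auto. Qed.

Lemma zsum_prefix m len a X : (a <= len)%nat ->
  zsum (seq m len) (fun i => if (i <? m + a)%nat then X i else 0%Z) = zsum (seq m a) X.
Proof.
  intro Ha. replace len with (a + (len - a))%nat by lia. rewrite seq_app, zsum_app.
  rewrite (zsum_zero (seq (m + a) (len - a))).
  - rewrite Z.add_0_r. apply zsum_ext. intros x Hx. apply in_seq in Hx.
    destruct (Nat.ltb_spec x (m + a)); [auto|lia].
  - intros x Hx. apply in_seq in Hx. destruct (Nat.ltb_spec x (m + a)); [lia|auto].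
Qed.

Lemma zsum_suffix m len b X : (m <= b)%nat -> (b <= m + len)%nat ->
  zsum (seq m len) (fun j => if (b <=? j)%nat then X j else 0%Z) = zsum (seq b (m + len - b)) X.
Proof.
  intros H1 H2. replace len with ((b - m) + (m + len - b))%nat by lia. rewrite seq_app, zsum_app.
  replace (m + (b - m))%nat with b by lia.
  rewrite (zsum_zero (seq m (b - m))).
  - replace (m + (b - m + (m + len - b)) - b)%nat with (m + len - b)%nat by lia.
    simpl. apply zsum_ext. intros x Hx. apply in_seq in Hx.
    destruct (Nat.leb_spec b x); [auto|lia].
  - intros x Hx. apply in_seq in Hx. destruct (Nat.leb_spec b x); [lia|auto].
Qed.

Lemma zsum_tele m len g :
  zsum (seq m len) (fun k => (g k - g (S k))%Z) = (g m - g (m + len)%nat)%Z.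
Proof.
  revert m. induction len; intro m; simpl.
  - rewrite Nat.add_0_r. ring.
  - unfold zsum in *; simpl. rewrite IHlen. replace (S m + len)%nat with (m + S len)%nat by lia. ring.
Qed.

Lemma zsum_tele1 a h :
  zsum (seq 1 a) (fun i => (h i - h (pred i))%Z) = (h a - h 0%nat)%Z.
Proof.
  induction a; [simpl; ring|].
  rewrite seq_S, zsum_app, IHa. unfold zsum; simpl. replace (a + 1)%nat with (S a) by lia. simpl. ring.
Qed.

Lemma coeff_flat_map {C : AbelianCat} {A} (f : A -> Belt C) l o :
  coeff (flat_map f l) o = zsum l (fun x => coeff (f x) o).
Proof. induction l; simpl; [reflexivity|]. rewrite coeff_app, IHl. reflexivity. Qed.

Lemma coeff_if {C : AbelianCat} (b : bool) (x : Belt C) o :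
  coeff (if b then x else []) o = if b then coeff x o else 0%Z.
Proof. destruct b; reflexivity. Qed.

Lemma eqb_spec' x y : eqb x y = true <-> x = y.
Proof. unfold eqb. destruct (Req_EM_T x y); split; intro; auto; congruence. Qed.
Lemma eqb_false x y : x <> y -> eqb x y = false.
Proof. unfold eqb. destruct (Req_EM_T x y); congruence. Qed.
Lemma eqb_true x : eqb x x = true.
Proof. apply eqb_spec'. auto. Qed.
Lemma leb_true x y : x <= y -> leb x y = true.
Proof. unfold leb. destruct (Rle_dec x y); auto; contradiction. Qed.
Lemma leb_false x y : ~ x <= y -> leb x y = false.
Proof. unfold leb. destruct (Rle_dec x y); auto; contradiction. Qed.
Lemma ltb_true x y : x < y -> ltb x y = true.
Proof. unfold ltb. destruct (Rlt_dec x y); auto; contradiction. Qed.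


Definition incr (n : nat) (s : nat -> R) :=
  forall i j, (1 <= i)%nat -> (i < j)%nat -> (j <= n)%nat -> s i < s j.

Lemma constr_incr {C : AbelianCat} (F : PMod C) n s : constructible F n s -> incr n s.
Proof.
  intros [_ [Hs _]] i j Hi Hij Hj.
  induction j as [|j IH]; [lia|].
  destruct (Nat.eq_dec i j) as [->|Hne].
  - apply Hs; lia.
  - apply Rlt_trans with (s j); [apply IH; lia | apply Hs; lia].
Qed.

Lemma incr_le n s i j : incr n s -> (1 <= i)%nat -> (i <= j)%nat -> (j <= n)%nat -> s i <= s j.
Proof.
  intros H H1 H2 H3. destruct (Nat.eq_dec i j) as [->|Hne]; [lra|]. left; apply H; lia.
Qed.

Lemma sx_in n s i : (1 <= i)%nat -> (i <= n)%nat -> sx n s i = s i.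
Proof.
  intros H1 H2. unfold sx. destruct (Nat.eqb_spec i 0); [lia|]. destruct (Nat.eqb_spec i (S n)); [lia|]. auto.
Qed.

Lemma sx_0 n s : sx n s 0 = s 1%nat - 1.
Proof. reflexivity. Qed.

Lemma sx_Sn n s : sx n s (S n) = s n + 1.
Proof. unfold sx. simpl. rewrite Nat.eqb_refl. reflexivity. Qed.

Lemma find_idx_some n s b : incr n s -> (1 <= b)%nat -> (b <= n)%nat -> find_idx s (s b) n = Some b.
Proof.
  intros Hi H1 H2. assert (G : forall k, (b <= k)%nat -> (k <= n)%nat -> find_idx s (s b) k = Some b).
  { induction k; intros K1 K2; [lia|]. simpl. destruct (Req_EM_T (s b) (s (S k))) as [E|E].
    - destruct (Nat.eq_dec (S k) b) as [->|Hne]; auto.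
      exfalso. assert (s b < s (S k)) by (apply Hi; lia). lra.
    - destruct (Nat.eq_dec (S k) b) as [<-|Hne]; [congruence|]. apply IHk; lia. }
  apply G; lia.
Qed.

Lemma find_idx_none s q k : (forall i, (1 <= i)%nat -> (i <= k)%nat -> s i <> q) -> find_idx s q k = None.
Proof.
  induction k; intro H; simpl; auto. destruct (Req_EM_T q (s (S k))) as [E|E].
  - exfalso. apply (H (S k)); auto; lia.
  - apply IHk. intros; apply H; lia.
Qed.

Lemma cut_exists n (P : nat -> Prop) :
  (forall i, P i \/ ~ P i) ->
  (forall i j, (1 <= i)%nat -> (i <= j)%nat -> (j <= n)%nat -> P j -> P i) ->
  exists a, (a <= n)%nat /\ forall i, (1 <= i)%nat -> (i <= n)%nat -> (P i <-> (i <= a)%nat).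
Proof.
  intros Hd Hm.
  assert (G : forall m, (m <= n)%nat -> exists a, (a <= m)%nat /\
     forall i, (1 <= i)%nat -> (i <= m)%nat -> (P i <-> (i <= a)%nat)).
  { induction m; intro Hmn.
    - exists 0%nat. split; auto. intros; lia.
    - destruct IHm as [a [Ha Hia]]; [lia|]. destruct (Hd (S m)) as [HP|HP].
      + exists (S m). split; auto. intros i H1 H2. split; intro; [lia|]. apply (Hm i (S m)); auto.
      + exists a. split; [lia|]. intros i H1 H2. destruct (Nat.eq_dec i (S m)) as [->|Hne].
        * split; intro; [contradiction|lia].
        * apply Hia; lia. }
  destruct (G n (le_n n)) as [a [Ha Hia]]. exists a. auto.
Qed.

Lemma a_exists n s p : incr n s -> exists a, (a <= n)%nat /\
  forall i, (1 <= i)%nat -> (i <= n)%nat -> (s i <= p <-> (i <= a)%nat).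
Proof.
  intro Hi. apply cut_exists.
  - intro i. destruct (Rle_dec (s i) p); auto.
  - intros i j H1 H2 H3 H. eapply Rle_trans; [|exact H]. apply (incr_le n); auto.
Qed.

Lemma b_exists n s q : incr n s -> exists b, (1 <= b)%nat /\ (b <= S n)%nat /\
  forall j, (1 <= j)%nat -> (j <= n)%nat -> (q <= s j <-> (b <= j)%nat).
Proof.
  intro Hi. destruct (cut_exists n (fun i => s i < q)) as [a [Ha Hia]].
  - intro i. destruct (Rlt_dec (s i) q); auto.
  - intros i j H1 H2 H3 H. eapply Rle_lt_trans; [|exact H]. apply (incr_le n); auto.
  - exists (S a). split; [lia|]. split; [lia|]. intros j H1 H2. specialize (Hia j H1 H2).
    split; intro H.
    + destruct (le_lt_dec (S a) j); auto. exfalso. assert (s j < q) by (apply Hia; lia). lra.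
    + destruct (Rlt_dec (s j) q) as [Hl|Hl]; [apply Hia in Hl; lia|]. lra.
Qed.


Definition Ec {C : AbelianCat} (F : PMod C) n s o i j :=
  coeff (dFB F n s (Fin (sx n s i) (sx n s j))) o.
Definition Fc {C : AbelianCat} (F : PMod C) n s o i :=
  coeff (dFB F n s (Inf (sx n s i))) o.

Lemma FB_fin_sel {C : AbelianCat} (F : PMod C) n s o i j : incr n s ->
  (1 <= i)%nat -> (i < j)%nat -> (j <= n)%nat ->
  coeff (FB F n s (Fin (s i) (s j))) o =
  (Ec F n s o i j - Ec F n s o i (S j) + Ec F n s o (pred i) (S j) - Ec F n s o (pred i) j)%Z.
Proof.
  intros Hi H1 H2 H3. unfold FB. rewrite coeff_flat_map.
  rewrite (zsum_single _ _ i).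
  - rewrite coeff_flat_map. rewrite (zsum_single _ _ j).
    + rewrite eqb_true, eqb_true. cbn [andb]. rewrite !coeff_app, !coeff_neg. unfold Ec. lia.
    + apply seq_NoDup.
    + apply in_seq; lia.
    + intros k Hk Hne. apply in_seq in Hk. rewrite (eqb_false (s j) (s k)); [rewrite andb_false_r; reflexivity|].
      intro E. destruct (Nat.lt_total j k) as [L|[L|L]]; [|congruence|].
      * assert (s j < s k) by (apply Hi; lia). lra.
      * assert (s k < s j) by (apply Hi; lia). lra.
  - apply seq_NoDup.
  - apply in_seq; lia.
  - intros k Hk Hne. apply in_seq in Hk. rewrite coeff_flat_map. apply zsum_zero. intros x _.
    rewrite (eqb_false (s i) (s k)); [reflexivity|].
    intro E. destruct (Nat.lt_total i k) as [L|[L|L]]; [|congruence|].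
    * assert (s i < s k) by (apply Hi; lia). lra.
    * assert (s k < s i) by (apply Hi; lia). lra.
Qed.

Lemma FB_inf_sel {C : AbelianCat} (F : PMod C) n s o i : incr n s ->
  (1 <= i)%nat -> (i <= n)%nat ->
  coeff (FB F n s (Inf (s i))) o = (Fc F n s o i - Fc F n s o (pred i))%Z.
Proof.
  intros Hi H1 H2. unfold FB. rewrite coeff_flat_map.
  rewrite (zsum_single _ _ i).
  - rewrite eqb_true. rewrite coeff_app, coeff_neg. unfold Fc. rewrite (sx_in n s i) by lia. lia.
  - apply seq_NoDup.
  - apply in_seq; lia.
  - intros k Hk Hne. apply in_seq in Hk.
    rewrite (eqb_false (s i) (s k)); [reflexivity|].
    intro E. destruct (Nat.lt_total i k) as [L|[L|L]]; [|congruence|].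
    * assert (s i < s k) by (apply Hi; lia). lra.
    * assert (s k < s i) by (apply Hi; lia). lra.
Qed.

Definition Lfin n s := flat_map (fun i => map (fun j => Fin (s i) (s j)) (seq (S i) (n - i))) (seq 1 n).
Definition Linf n (s : nat -> R) := map (fun i => Inf (s i)) (seq 1 n).
Definition LF n s := Lfin n s ++ Linf n s.

Lemma leb_char x y (P : Prop) (c : bool) : (x <= y <-> P) -> (c = true <-> P) -> leb x y = c.
Proof.
  intros H1 H2. destruct c.
  - apply leb_true. apply H1, H2. auto.
  - apply leb_false. intro H. apply H1, H2 in H. discriminate.
Qed.

Lemma upsum_coeff {C : AbelianCat} (Y : diagram C) L I o :
  coeff (upsum Y L I) o = zsum L (fun J => if validb J && containsb J I then coeff (Y J) o else 0%Z).
Proof.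
  unfold upsum. rewrite coeff_flat_map. apply zsum_ext. intros. apply coeff_if.
Qed.



Lemma upsum_fin {C : AbelianCat} (F : PMod C) n s o p q a b : incr n s ->
  (a <= n)%nat -> (a < b)%nat -> (b <= S n)%nat ->
  (forall i, (1 <= i)%nat -> (i <= n)%nat -> (s i <= p <-> (i <= a)%nat)) ->
  (forall j, (1 <= j)%nat -> (j <= n)%nat -> (q <= s j <-> (b <= j)%nat)) ->
  coeff (upsum (FB F n s) (LF n s) (Fin p q)) o =
  (Ec F n s o a b - Ec F n s o a (S n) - Ec F n s o 0 b + Ec F n s o 0 (S n)
   + Fc F n s o a - Fc F n s o 0)%Z.
Proof.
  intros Hi Ha Hab Hb HA HB. rewrite upsum_coeff. unfold LF. rewrite zsum_app. unfold Lfin, Linf.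
  rewrite zsum_flat_map, zsum_map.
  transitivity (zsum (seq 1 n) (fun i => if (i <? 1 + a)%nat then
     zsum (seq (S i) (n - i)) (fun j => if (b <=? j)%nat then
     (Ec F n s o i j - Ec F n s o i (S j) + Ec F n s o (pred i) (S j) - Ec F n s o (pred i) j)%Z else 0%Z)
     else 0%Z) +
     zsum (seq 1 n) (fun i => if (i <? 1 + a)%nat then (Fc F n s o i - Fc F n s o (pred i))%Z else 0%Z))%Z.
  - f_equal.
    + apply zsum_ext. intros i Hi'. apply in_seq in Hi'. rewrite zsum_map. rewrite <- zsum_if.
      apply zsum_ext. intros j Hj. apply in_seq in Hj. simpl validb. simpl containsb.
      rewrite ltb_true by (apply Hi; lia).
      rewrite (leb_char (s i) p (i <= a)%nat (i <? 1 + a)%nat) by first [apply HA; lia | rewrite Nat.ltb_lt; lia].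
      rewrite (leb_char q (s j) (b <= j)%nat (b <=? j)%nat) by first [apply HB; lia | rewrite Nat.leb_le; lia].
      destruct (i <? 1 + a)%nat eqn:E1; destruct (b <=? j)%nat eqn:E2; simpl; auto.
      apply FB_fin_sel; auto; lia.
    + apply zsum_ext. intros i Hi'. apply in_seq in Hi'. simpl validb. simpl containsb.
      rewrite (leb_char (s i) p (i <= a)%nat (i <? 1 + a)%nat) by first [apply HA; lia | rewrite Nat.ltb_lt; lia].
      destruct (i <? 1 + a)%nat eqn:E1; simpl; auto. apply FB_inf_sel; auto; lia.
  - rewrite !zsum_prefix by lia.
    rewrite (zsum_ext (seq 1 a) _ (fun i =>
       ((Ec F n s o i b - Ec F n s o i (S n)) - (Ec F n s o (pred i) b - Ec F n s o (pred i) (S n)))%Z)).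
    + rewrite (zsum_tele1 a (fun i => (Ec F n s o i b - Ec F n s o i (S n))%Z)).
      rewrite zsum_tele1. lia.
    + intros i Hi'. apply in_seq in Hi'. rewrite zsum_suffix by lia.
      rewrite (zsum_ext _ _ (fun j => ((Ec F n s o i j - Ec F n s o (pred i) j) -
          (Ec F n s o i (S j) - Ec F n s o (pred i) (S j)))%Z)) by (intros; lia).
      rewrite zsum_tele. replace (b + (S i + (n - i) - b))%nat with (S n) by lia. lia.
Qed.

Lemma upsum_inf {C : AbelianCat} (F : PMod C) n s o p a : incr n s -> (a <= n)%nat ->
  (forall i, (1 <= i)%nat -> (i <= n)%nat -> (s i <= p <-> (i <= a)%nat)) ->
  coeff (upsum (FB F n s) (LF n s) (Inf p)) o = (Fc F n s o a - Fc F n s o 0)%Z.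
Proof.
  intros Hi Ha HA. rewrite upsum_coeff. unfold LF. rewrite zsum_app. unfold Lfin, Linf.
  rewrite zsum_flat_map, zsum_map.
  rewrite zsum_zero.
  2:{ intros i _. rewrite zsum_map. apply zsum_zero. intros j _. simpl containsb.
      rewrite andb_false_r. reflexivity. }
  transitivity (zsum (seq 1 n) (fun i => if (i <? 1 + a)%nat then (Fc F n s o i - Fc F n s o (pred i))%Z else 0%Z)).
  - apply zsum_ext. intros i Hi'. apply in_seq in Hi'. simpl validb. simpl containsb.
    rewrite (leb_char (s i) p (i <= a)%nat (i <? 1 + a)%nat) by first [apply HA; lia | rewrite Nat.ltb_lt; lia].
    destruct (i <? 1 + a)%nat eqn:E1; simpl; auto. apply FB_inf_sel; auto; lia.
  - rewrite zsum_prefix by lia. rewrite zsum_tele1. lia.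
Qed.


Definition fac {C : AbelianCat} {a b c d : Ob C} (f : Hom C a b) (g : Hom C c d) : Prop :=
  exists (t : Hom C a c) (k : Hom C d b), f = comp k (comp g t).

Lemma fac_trans {C : AbelianCat} {a b c d e f' : Ob C} (f : Hom C a b) (g : Hom C c d) (h : Hom C e f') :
  fac f g -> fac g h -> fac f h.
Proof.
  intros [t1 [k1 E1]] [t2 [k2 E2]]. exists (comp t2 t1), (comp k1 k2).
  rewrite E1, E2. rewrite !comp_assoc. reflexivity.
Qed.

Lemma Fmap_pi {C : AbelianCat} (F : PMod C) p q (h h' : p <= q) : Fmap F h = Fmap F h'.
Proof.
  rewrite (Fmap_comp F h' (Rle_refl q) h), Fmap_id, comp_idl. reflexivity.
Qed.

Lemma iso_inv {C : AbelianCat} a b (f : Hom C a b) : is_iso f -> exists g, comp g f = idm a /\ comp f g = idm b.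
Proof. auto. Qed.

Lemma swap_map {C : AbelianCat} (F : PMod C) x u m (hu : x <= u) (hm : x <= m) :
  (forall (h : Rmin u m <= Rmax u m), is_iso (Fmap F h)) ->
  exists K, Fmap F hu = comp K (Fmap F hm).
Proof.
  intro Hiso. destruct (Rle_dec m u) as [Hmu|Hmu].
  - exists (Fmap F Hmu). apply Fmap_comp.
  - assert (Hum : u <= m) by lra.
    assert (E1 : Rmin u m = u) by (apply Rmin_left; lra).
    assert (E2 : Rmax u m = m) by (apply Rmax_right; lra).
    assert (Hi : is_iso (Fmap F Hum)).
    { pose proof (Hiso (Rle_trans _ _ _ (Rmin_l u m) (Rmax_l u m))) as H.
      revert H. generalize (Rle_trans _ _ _ (Rmin_l u m) (Rmax_l u m)). rewrite E1, E2. intros h H.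
      rewrite (Fmap_pi F _ _ Hum h). exact H. }
    destruct Hi as [r [Hr1 Hr2]]. exists r.
    rewrite (Fmap_comp F hu Hum hm), comp_assoc, Hr1, comp_idl. reflexivity.
Qed.

Lemma pair_fac {C : AbelianCat} (F : PMod C) x p u y (hxp : x <= p) (hu : p <= u) (hy : x <= y) :
  is_iso (Fmap F hxp) ->
  (forall (h : Rmin u y <= Rmax u y), is_iso (Fmap F h)) ->
  (forall (h : Rmin y u <= Rmax y u), is_iso (Fmap F h)) ->
  fac (Fmap F hu) (Fmap F hy) /\ fac (Fmap F hy) (Fmap F hu).
Proof.
  intros [r [Hr1 Hr2]] I1 I2.
  assert (hxu : x <= u) by lra.
  destruct (swap_map F x u y hxu hy I1) as [K1 E1].
  destruct (swap_map F x y u hy hxu I2) as [K2 E2].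
  split.
  - exists r, K1. rewrite comp_assoc, <- E1, (Fmap_comp F hxp hu hxu), <- comp_assoc, Hr2, comp_idr. auto.
  - exists (Fmap F hxp), K2. rewrite <- (Fmap_comp F hxp hu hxu). auto.
Qed.

Lemma iso_cell {C : AbelianCat} (F : PMod C) n s : constructible F n s ->
  forall x y (h : x <= y), ((exists i, (1 <= i)%nat /\ (i < n)%nat /\ s i <= x /\ y < s (S i)) \/ s n <= x) ->
  is_iso (Fmap F h).
Proof.
  intros [_ [_ [_ [H1 H2]]]] x y h [[i [A [B [D E]]]]|D]; eauto.
Qed.

Lemma zero_below {C : AbelianCat} (F : PMod C) n s p : constructible F n s -> p < s 1%nat -> is_zero (Fob F p).
Proof. intros [_ [_ [H _]]] Hp. auto. Qed.

Lemma imc_zero {C : AbelianCat} (hab : abelian_normal C) (F : PMod C) n s p r :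
  constructible F n s -> p < s 1%nat -> Bnull (imc F p r).
Proof.
  intros Hc Hp. unfold imc. destruct (Rle_dec p r).
  - eapply Bnull_im_zero; eauto. eapply zero_below; eauto.
  - apply Bnull_nil.
Qed.

Lemma dFB_fin_zero {C : AbelianCat} (hab : abelian_normal C) (F : PMod C) n s j :
  constructible F n s -> Bnull (dFB F n s (Fin (sx n s 0) (sx n s j))).
Proof.
  intro Hc. unfold dFB. rewrite sx_0. destruct (find_idx s (sx n s j) n); apply (imc_zero hab F n s); auto; lra.
Qed.

Lemma dFB_inf_zero {C : AbelianCat} (hab : abelian_normal C) (F : PMod C) n s :
  constructible F n s -> Bnull (dFB F n s (Inf (sx n s 0))).
Proof.
  intro Hc. unfold dFB. rewrite sx_0. apply (imc_zero hab F n s); auto; lra.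
Qed.

Lemma dFB_last {C : AbelianCat} (F : PMod C) n s a : incr n s -> (1 <= a)%nat -> (a <= n)%nat ->
  dFB F n s (Fin (sx n s a) (sx n s (S n))) = dFB F n s (Inf (sx n s a)).
Proof.
  intros Hi H1 H2. unfold dFB. rewrite sx_Sn, (sx_in n s a) by lia.
  rewrite find_idx_none.
  - rewrite Rmax_right; auto. apply (incr_le n); auto.
  - intros i A B E. assert (s i <= s n) by (apply (incr_le n); auto; lia). lra.
Qed.

Lemma dFB_mid {C : AbelianCat} (F : PMod C) n s a b : incr n s -> (1 <= a)%nat -> (a < b)%nat -> (b <= n)%nat ->
  dFB F n s (Fin (sx n s a) (sx n s b)) = imc F (s a) ((Rmax (s a) (s (pred b)) + s b) / 2).
Proof.
  intros Hi H1 H2 H3. unfold dFB. rewrite (sx_in n s a), (sx_in n s b) by lia.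
  rewrite find_idx_some by (auto; lia). unfold prev_bound.
  destruct (Nat.eqb_spec b 1); [lia|]. reflexivity.
Qed.

Lemma imc_cls {C : AbelianCat} (F : PMod C) x y : x <= y -> exists h : x <= y, imc F x y = cls (im_obj (Fmap F h)).
Proof. intro H. unfold imc. destruct (Rle_dec x y); [eauto|contradiction]. Qed.


Lemma zero_fac {C : AbelianCat} (F : PMod C) p u (hu : p <= u) (hp : p <= p) :
  is_zero (Fob F p) -> fac (Fmap F hu) (Fmap F hp) /\ fac (Fmap F hp) (Fmap F hu).
Proof.
  intro Hz. split.
  - exists (idm _), (Fmap F hu). rewrite Fmap_id, !comp_idr. reflexivity.
  - exists (idm _), (hzero _ _). destruct (proj1 (Hz (Fob F p))) as [f Hf].
    rewrite (Hf (Fmap F hp)), (Hf (comp _ _)). reflexivity.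
Qed.

Lemma constr_n {C : AbelianCat} (F : PMod C) n s : constructible F n s -> (1 <= n)%nat.
Proof. intros [H _]; exact H. Qed.

Lemma rep_fin {C : AbelianCat} (hab : abelian_normal C) (F : PMod C) n s p q :
  constructible F n s -> p < q ->
  exists x y (h : x <= y),
    Bnull (upsum (FB F n s) (LF n s) (Fin p q) ++ Bneg (cls (im_obj (Fmap F h)))) /\
    exists eta, 0 < eta /\ forall u (hu : p <= u), q - eta < u -> u < q ->
      fac (Fmap F hu) (Fmap F h) /\ fac (Fmap F h) (Fmap F hu).
Proof.
  intros Hc Hpq. pose proof (constr_incr F n s Hc) as Hi. pose proof (constr_n F n s Hc) as Hn.
  destruct (a_exists n s p Hi) as [a [Ha HA]].
  destruct (b_exists n s q Hi) as [b [Hb1 [Hb2 HB]]].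
  assert (Hab : (a < b)%nat).
  { destruct (le_lt_dec b a) as [L|L]; auto. exfalso.
    assert (s b <= p) by (apply HA; first [lia|lra]). assert (q <= s b) by (apply HB; first [lia|lra]). lra. }
  pose proof (fun o => upsum_fin F n s o p q a b Hi Ha Hab Hb2 HA HB) as Hup.
  destruct a as [|a].
  - assert (Hp1 : p < s 1%nat).
    { destruct (Rlt_dec p (s 1%nat)) as [L|L]; auto. exfalso. assert (1 <= 0)%nat by (apply HA; first [lia|lra]). lia. }
    pose proof (zero_below F n s p Hc Hp1) as Hz.
    exists p, p, (Rle_refl p). split.
    + apply Bnull_ext with (y := Bneg (cls (im_obj (Fmap F (Rle_refl p))))).
      * intro o. rewrite coeff_app, !coeff_neg, Hup. lia.
      * apply Bnull_neg. eapply Bnull_im_zero; eauto.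
    + exists (q - p). split; [lra|]. intros u hu _ _. apply zero_fac; auto.
  - set (A := S a) in *.
    assert (HsA : s A <= p) by (apply HA; first [lia|lra]).
    assert (Hleft : forall (h : s A <= p), is_iso (Fmap F h)).
    { intro h. apply (iso_cell F n s Hc). destruct (Nat.eq_dec A n) as [E|E].
      - right. rewrite <- E. lra.
      - left. exists A. split; [lia|]. split; [lia|]. split; [lra|].
        destruct (Rlt_dec p (s (S A))) as [L|L]; auto. exfalso.
        assert (S A <= A)%nat by (apply HA; first [lia|lra]). lia. }
    destruct (Nat.eq_dec b (S n)) as [Eb|Eb].
    + subst b.
      assert (Hsn : s n < q).
      { destruct (Rlt_dec (s n) q) as [L|L]; auto. exfalso. assert (S n <= n)%nat by (apply HB; first [lia|lra]). lia. }
      assert (HsAn : s A <= s n) by (apply (incr_le n); auto; lia).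
      destruct (imc_cls F (s A) (Rmax (s A) (s n) + 1)) as [h Eh].
      { pose proof (Rmax_l (s A) (s n)). lra. }
      assert (Ed : dFB F n s (Inf (sx n s A)) = cls (im_obj (Fmap F h))).
      { unfold dFB. rewrite (sx_in n s A) by lia. exact Eh. }
      exists (s A), (Rmax (s A) (s n) + 1), h. split.
      * apply Bnull_ext with (y := Bneg (dFB F n s (Inf (sx n s 0)))).
        -- intro o. rewrite coeff_app, !coeff_neg, Hup. unfold Fc. rewrite Ed. lia.
        -- apply Bnull_neg. apply dFB_inf_zero; auto.
      * exists (q - Rmax p (s n)). pose proof (Rmax_l p (s n)). pose proof (Rmax_r p (s n)).
        pose proof (Rmax_l (s A) (s n)). pose proof (Rmax_r (s A) (s n)). split; [apply Rlt_Rminus, Rmax_lub_lt; lra|].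
        intros u hu Hu1 Hu2. apply pair_fac with (hxp := HsA); auto.
        -- intro h'. apply (iso_cell F n s Hc). right. apply Rmin_glb; lra.
        -- intro h'. apply (iso_cell F n s Hc). right. apply Rmin_glb; lra.
    + assert (Hb : (b <= n)%nat) by lia.
      assert (Hpb : (1 <= pred b)%nat) by lia.
      assert (Hsb : s (pred b) < q).
      { destruct (Rlt_dec (s (pred b)) q) as [L|L]; auto. exfalso. assert (b <= pred b)%nat by (apply HB; first [lia|lra]). lia. }
      assert (Hqb : q <= s b) by (apply HB; first [lia|lra]).
      assert (HAb : s A < s b) by (apply Hi; lia).
      assert (Hpbb : s (pred b) < s b) by (apply Hi; lia).
      set (y := (Rmax (s A) (s (pred b)) + s b) / 2).
      pose proof (Rmax_l (s A) (s (pred b))). pose proof (Rmax_r (s A) (s (pred b))).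
      assert (Hmx : Rmax (s A) (s (pred b)) < s b) by (apply Rmax_lub_lt; lra).
      destruct (imc_cls F (s A) y) as [h Eh]; [unfold y; lra|].
      assert (Ed : dFB F n s (Fin (sx n s A) (sx n s b)) = cls (im_obj (Fmap F h))).
      { rewrite dFB_mid by (auto; lia). exact Eh. }
      exists (s A), y, h. split.
      * apply Bnull_ext with (y := Bneg (dFB F n s (Fin (sx n s 0) (sx n s b))) ++
            dFB F n s (Fin (sx n s 0) (sx n s (S n))) ++ Bneg (dFB F n s (Inf (sx n s 0)))).
        -- intro o. rewrite coeff_app, !coeff_neg, Hup. unfold Ec, Fc.
           rewrite Ed, (dFB_last F n s A) by (auto; lia). rewrite !coeff_app, !coeff_neg. lia.
        -- apply Bnull_app; [apply Bnull_neg, dFB_fin_zero; auto|].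
           apply Bnull_app; [apply dFB_fin_zero; auto|]. apply Bnull_neg, dFB_inf_zero; auto.
      * exists (q - Rmax p (s (pred b))). pose proof (Rmax_l p (s (pred b))). pose proof (Rmax_r p (s (pred b))).
        split; [apply Rlt_Rminus, Rmax_lub_lt; lra|].
        intros u hu Hu1 Hu2. apply pair_fac with (hxp := HsA); auto.
        -- intro h'. apply (iso_cell F n s Hc). left. exists (pred b).
           replace (S (pred b)) with b by lia. split; [lia|]. split; [lia|].
           split; [apply Rmin_glb; unfold y; lra | apply Rmax_lub_lt; unfold y; lra].
        -- intro h'. apply (iso_cell F n s Hc). left. exists (pred b).
           replace (S (pred b)) with b by lia. split; [lia|]. split; [lia|].
           split; [apply Rmin_glb; unfold y; lra | apply Rmax_lub_lt; unfold y; lra].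
Qed.

Lemma rep_inf {C : AbelianCat} (hab : abelian_normal C) (F : PMod C) n s p :
  constructible F n s ->
  exists x y (h : x <= y),
    Bnull (upsum (FB F n s) (LF n s) (Inf p) ++ Bneg (cls (im_obj (Fmap F h)))) /\
    exists M, forall u (hu : p <= u), M <= u ->
      fac (Fmap F hu) (Fmap F h) /\ fac (Fmap F h) (Fmap F hu).
Proof.
  intros Hc. pose proof (constr_incr F n s Hc) as Hi. pose proof (constr_n F n s Hc) as Hn.
  destruct (a_exists n s p Hi) as [a [Ha HA]].
  pose proof (fun o => upsum_inf F n s o p a Hi Ha HA) as Hup.
  destruct a as [|a].
  - assert (Hp1 : p < s 1%nat).
    { destruct (Rlt_dec p (s 1%nat)) as [L|L]; auto. exfalso. assert (1 <= 0)%nat by (apply HA; first [lia|lra]). lia. }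
    pose proof (zero_below F n s p Hc Hp1) as Hz.
    exists p, p, (Rle_refl p). split.
    + apply Bnull_ext with (y := Bneg (cls (im_obj (Fmap F (Rle_refl p))))).
      * intro o. rewrite coeff_app, !coeff_neg, Hup. lia.
      * apply Bnull_neg. eapply Bnull_im_zero; eauto.
    + exists p. intros u hu _. apply zero_fac; auto.
  - set (A := S a) in *.
    assert (HsA : s A <= p) by (apply HA; first [lia|lra]).
    assert (Hleft : forall (h : s A <= p), is_iso (Fmap F h)).
    { intro h. apply (iso_cell F n s Hc). destruct (Nat.eq_dec A n) as [E|E].
      - right. rewrite <- E. lra.
      - left. exists A. split; [lia|]. split; [lia|]. split; [lra|].
        destruct (Rlt_dec p (s (S A))) as [L|L]; auto. exfalso.
        assert (S A <= A)%nat by (apply HA; first [lia|lra]). lia. }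
    assert (HsAn : s A <= s n) by (apply (incr_le n); auto; lia).
    destruct (imc_cls F (s A) (Rmax (s A) (s n) + 1)) as [h Eh].
    { pose proof (Rmax_l (s A) (s n)). lra. }
    assert (Ed : dFB F n s (Inf (sx n s A)) = cls (im_obj (Fmap F h))).
    { unfold dFB. rewrite (sx_in n s A) by lia. exact Eh. }
    exists (s A), (Rmax (s A) (s n) + 1), h. split.
    + apply Bnull_ext with (y := Bneg (dFB F n s (Inf (sx n s 0)))).
      * intro o. rewrite coeff_app, !coeff_neg, Hup. unfold Fc. rewrite Ed. lia.
      * apply Bnull_neg. apply dFB_inf_zero; auto.
    + exists (Rmax p (s n)). pose proof (Rmax_l p (s n)). pose proof (Rmax_r p (s n)).
      pose proof (Rmax_l (s A) (s n)). pose proof (Rmax_r (s A) (s n)).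
      intros u hu Hu1. apply pair_fac with (hxp := HsA); auto.
      * intro h'. apply (iso_cell F n s Hc). right. apply Rmin_glb; lra.
      * intro h'. apply (iso_cell F n s Hc). right. apply Rmin_glb; lra.
Qed.


Lemma interleaved_sym {C : AbelianCat} (F G : PMod C) eps : interleaved F G eps -> interleaved G F eps.
Proof. intros [phi [psi [H1 [H2 [H3 H4]]]]]. exists psi, phi. auto. Qed.

Lemma interleave_fac {C : AbelianCat} (F G : PMod C) eps : 0 <= eps -> interleaved F G eps ->
  forall p w (h1 : p - eps <= w + eps) (h2 : p <= w), fac (Fmap G h1) (Fmap F h2).
Proof.
  intros He [phi [psi [N1 [N2 [C3 C4]]]]] p w h1 h2.
  set (r := p - eps).
  assert (hh : r <= r + eps + eps) by (unfold r; lra).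
  assert (h' : r + eps + eps <= w + eps) by (unfold r; lra).
  assert (h0 : r + eps <= w) by (unfold r; lra).
  assert (hrp : r + eps <= p) by (unfold r; lra).
  exists (comp (Fmap F hrp) (psi r)), (phi w).
  change (p - eps) with r in h1 |- *.
  rewrite (Fmap_comp G hh h' h1), <- (C4 r hh), comp_assoc, (N1 (r + eps) w h0 h').
  rewrite (Fmap_comp F hrp h2 h0). rewrite !comp_assoc. reflexivity.
Qed.

Lemma fac_dom {C : AbelianCat} (hab : abelian_normal C) {a b c d : Ob C} (v : Hom C a b) (u : Hom C c d) :
  fac v u -> exists S, Bnull (cls (im_obj u) ++ Bneg (cls (im_obj v)) ++ Bneg (cls S)).
Proof. intros [t [k E]]. eapply dom_im; eauto. Qed.

Lemma ble_comb {C : AbelianCat} (UF UG : Belt C) iF iG S :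
  Bnull (UF ++ Bneg (cls iF)) -> Bnull (UG ++ Bneg (cls iG)) ->
  Bnull (cls iF ++ Bneg (cls iG) ++ Bneg (cls S)) -> Ble UG UF.
Proof.
  intros N1 N2 N3. exists S.
  apply Bnull_ext with (y := (UF ++ Bneg (cls iF)) ++ Bneg (UG ++ Bneg (cls iG)) ++
     (cls iF ++ Bneg (cls iG) ++ Bneg (cls S))).
  - intro o. rewrite !coeff_app, !coeff_neg, !coeff_app, !coeff_neg. lia.
  - apply Bnull_app; [exact N1|]. apply Bnull_app; [apply Bnull_neg; exact N2|exact N3].
Qed.

Lemma incr_inj n s i j : incr n s -> (1 <= i)%nat -> (i <= n)%nat -> (1 <= j)%nat -> (j <= n)%nat ->
  s i = s j -> i = j.
Proof.
  intros H A B D E Eq. destruct (Nat.lt_total i j) as [L|[L|L]]; auto.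
  - assert (s i < s j) by (apply H; lia). lra.
  - assert (s j < s i) by (apply H; lia). lra.
Qed.

Lemma NoDup_flat_map' {A B} (g : A -> list B) l :
  NoDup l -> (forall x, In x l -> NoDup (g x)) ->
  (forall x y z, In x l -> In y l -> In z (g x) -> In z (g y) -> x = y) -> NoDup (flat_map g l).
Proof.
  induction l as [|x l IH]; intros ND H1 H2; simpl; [constructor|].
  inversion ND; subst. apply NoDup_app.
  - apply H1; left; auto.
  - apply IH; auto. intros; apply H1; right; auto. intros; eapply H2; eauto; right; auto.
  - intros z Hz Hz'. apply in_flat_map in Hz'. destruct Hz' as [y [Hy Hzy]].
    assert (x = y) by (eapply H2; eauto; [left; auto| right; auto]). subst. contradiction.
Qed.

Lemma fin_supp_FB {C : AbelianCat} (F : PMod C) n s : incr n s -> fin_supp (FB F n s) (LF n s).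
Proof.
  intro Hi. split.
  - unfold LF. apply NoDup_app.
    + unfold Lfin. apply NoDup_flat_map'.
      * apply seq_NoDup.
      * intros i Hi'. apply in_seq in Hi'. apply NoDup_map_NoDup_ForallPairs; [|apply seq_NoDup].
        intros j j' Hj Hj' E. apply in_seq in Hj. apply in_seq in Hj'.
        assert (E2 : s j = s j') by (injection E; auto).
        apply (incr_inj n s); auto; lia.
      * intros i i' z Hi1 Hi2 Hz1 Hz2. apply in_seq in Hi1. apply in_seq in Hi2.
        apply in_map_iff in Hz1. apply in_map_iff in Hz2.
        destruct Hz1 as [j [<- Hj]]. destruct Hz2 as [j' [E Hj']].
        assert (E2 : s i' = s i) by (injection E; intros; auto).
        apply (incr_inj n s); auto; lia.
    + unfold Linf. apply NoDup_map_NoDup_ForallPairs; [|apply seq_NoDup].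
      intros j j' Hj Hj' E. apply in_seq in Hj. apply in_seq in Hj'. injection E; intros E2.
      apply (incr_inj n s); auto; lia.
    + intros z Hz1 Hz2. unfold Lfin in Hz1. unfold Linf in Hz2.
      apply in_flat_map in Hz1. destruct Hz1 as [i [_ Hz1]]. apply in_map_iff in Hz1. destruct Hz1 as [j [<- _]].
      apply in_map_iff in Hz2. destruct Hz2 as [k [E _]]. discriminate.
  - intros J _ HJ. apply Bnull_ext with (y := []); [|apply Bnull_nil].
    intro o. rewrite coeff_nil. destruct J as [p q|p]; unfold FB; rewrite coeff_flat_map; apply zsum_zero.
    + intros i Hi'. rewrite coeff_flat_map. apply zsum_zero. intros j Hj. cbv beta.
      destruct (eqb p (s i) && eqb q (s j)) eqn:E; [|reflexivity]. exfalso. apply HJ.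
      apply andb_true_iff in E. destruct E as [E1 E2]. apply eqb_spec' in E1. apply eqb_spec' in E2.
      subst. unfold LF. apply in_or_app. left. unfold Lfin. apply in_flat_map. exists i. split; auto.
      apply in_map_iff. exists j. auto.
    + intros i Hi'. cbv beta. destruct (eqb p (s i)) eqn:E; [|reflexivity]. exfalso. apply HJ.
      apply eqb_spec' in E. subst. unfold LF. apply in_or_app. right. unfold Linf. apply in_map_iff. eauto.
Qed.

Definition ungrow (eps : R) (J : interval) : interval :=
  match J with Fin a b => Fin (a + eps) (b - eps) | Inf a => Inf (a + eps) end.

Lemma ungrow_Grow eps J : ungrow eps (Grow eps J) = J.
Proof. destruct J; simpl; f_equal; ring. Qed.
Lemma Grow_ungrow eps J : Grow eps (ungrow eps J) = J.
Proof. destruct J; simpl; f_equal; ring. Qed.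

Lemma fin_supp_nabla {C : AbelianCat} (Y : diagram C) L eps : 0 <= eps -> fin_supp Y L ->
  fin_supp (nabla eps Y) (map (ungrow eps) L).
Proof.
  intros He [ND HN]. split.
  - apply NoDup_map_NoDup_ForallPairs; auto. intros x y _ _ E.
    rewrite <- (Grow_ungrow eps x), <- (Grow_ungrow eps y), E. auto.
  - intros J HJ Hn. unfold nabla. apply HN.
    + destruct J; simpl in *; auto; lra.
    + intro Hin. apply Hn. rewrite <- (ungrow_Grow eps J). apply in_map; auto.
Qed.

Lemma upsum_nabla {C : AbelianCat} (Y : diagram C) L eps I : 0 <= eps -> valid I ->
  upsum (nabla eps Y) (map (ungrow eps) L) I = upsum Y L (Grow eps I).
Proof.
  intros He HI. unfold upsum. induction L as [|J L IH]; simpl; auto. rewrite IH. f_equal.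
  unfold nabla. rewrite Grow_ungrow.
  replace (validb (ungrow eps J) && containsb (ungrow eps J) I) with (validb J && containsb J (Grow eps I)); auto.
  destruct J as [a b|a]; destruct I as [p q|p]; simpl in *; unfold ltb, leb;
    repeat destruct (Rle_dec _ _); repeat destruct (Rlt_dec _ _); simpl; auto; lra.
Qed.

Lemma diag_one {C : AbelianCat} (hab : abelian_normal C) (F G : PMod C) nF sF nG sG eps :
  constructible F nF sF -> constructible G nG sG -> 0 <= eps -> interleaved F G eps ->
  diag_mor (nabla eps (FB G nG sG)) (FB F nF sF).
Proof.
  intros HF HG He Hint.
  exists (map (ungrow eps) (LF nG sG)), (LF nF sF).
  split; [apply fin_supp_nabla; auto; apply fin_supp_FB, (constr_incr G); auto|].
  split; [apply fin_supp_FB, (constr_incr F); auto|].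
  intros I HI _. rewrite upsum_nabla by auto.
  destruct I as [p q|p].
  - simpl in HI. simpl Grow.
    destruct (rep_fin hab G nG sG (p - eps) (q + eps) HG ltac:(lra)) as [xG [yG [hG [NG [etaG [HeG RG]]]]]].
    destruct (rep_fin hab F nF sF p q HF HI) as [xF [yF [hF [NF [etaF [HeF RF]]]]]].
    set (eta := Rmin (Rmin etaG etaF) (q - p) / 2).
    assert (E1 : Rmin (Rmin etaG etaF) (q - p) <= etaG) by (eapply Rle_trans; [apply Rmin_l|apply Rmin_l]).
    assert (E2 : Rmin (Rmin etaG etaF) (q - p) <= etaF) by (eapply Rle_trans; [apply Rmin_l|apply Rmin_r]).
    assert (E3 : Rmin (Rmin etaG etaF) (q - p) <= q - p) by apply Rmin_r.
    assert (E4 : 0 < Rmin (Rmin etaG etaF) (q - p)) by (apply Rmin_glb_lt; [apply Rmin_glb_lt|]; lra).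
    set (w := q - eta).
    assert (hw : p <= w) by (unfold w, eta; lra).
    assert (hu : p - eps <= w + eps) by lra.
    destruct (RG (w + eps) hu ltac:(unfold w, eta; lra) ltac:(unfold w, eta; lra)) as [_ FG1].
    destruct (RF w hw ltac:(unfold w, eta; lra) ltac:(unfold w, eta; lra)) as [FF1 _].
    pose proof (interleave_fac F G eps He Hint p w hu hw) as FI.
    assert (Hfac : fac (Fmap G hG) (Fmap F hF)).
    { eapply fac_trans; [exact FG1|]. eapply fac_trans; [exact FI|exact FF1]. }
    destruct (fac_dom hab _ _ Hfac) as [S HS].
    eapply ble_comb; [exact NF|exact NG|exact HS].
  - simpl Grow.
    destruct (rep_inf hab G nG sG (p - eps) HG) as [xG [yG [hG [NG [MG RG]]]]].
    destruct (rep_inf hab F nF sF p HF) as [xF [yF [hF [NF [MF RF]]]]].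
    set (w := Rmax (Rmax MF MG) p).
    pose proof (Rmax_l (Rmax MF MG) p). pose proof (Rmax_r (Rmax MF MG) p).
    pose proof (Rmax_l MF MG). pose proof (Rmax_r MF MG).
    assert (hw : p <= w) by (unfold w; lra).
    assert (hu : p - eps <= w + eps) by lra.
    destruct (RG (w + eps) hu ltac:(unfold w; lra)) as [_ FG1].
    destruct (RF w hw ltac:(unfold w; lra)) as [FF1 _].
    pose proof (interleave_fac F G eps He Hint p w hu hw) as FI.
    assert (Hfac : fac (Fmap G hG) (Fmap F hF)).
    { eapply fac_trans; [exact FG1|]. eapply fac_trans; [exact FI|exact FF1]. }
    destruct (fac_dom hab _ _ Hfac) as [S HS].
    eapply ble_comb; [exact NF|exact NG|exact HS].
Qed.

Lemma glb_sub (E1 E2 : R -> Prop) : (forall x, E2 x -> E1 x) -> Rbar_le (Glb_Rbar E1) (Glb_Rbar E2).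
Proof.
  intro H. destruct (Glb_Rbar_correct E1) as [L1 _]. destruct (Glb_Rbar_correct E2) as [_ G2].
  apply G2. intros x Hx. apply L1, H, Hx.
Qed.

Theorem theorem8p2 (C : AbelianCat) (hab : abelian_normal C) (hconc : concrete C)
  (F G : PMod C) (nF : nat) (sF : nat -> R) (nG : nat) (sG : nat -> R)
  (hF : constructible F nF sF) (hG : constructible G nG sG) :
  Rbar_le (d_E (FB F nF sF) (FB G nG sG)) (d_I F G).
Proof.
  unfold d_E, d_I. apply glb_sub. intros eps [He Hint]. split; auto. split.
  - apply diag_one; auto.
  - apply diag_one; auto. apply interleaved_sym; auto.
Qed.
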